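(* Let $\varphi$ be a quantifier-free formula in the SMT theory of floating-point numbers and $\mathit{cost}$ a floating-point variable occurring in $\varphi$ with $n$ bits, and suppose $\varphi_{\mathrm{noNaN}}:=\varphi\wedge\neg\mathrm{isNaN}(\mathit{cost})$ is satisfiable; consider minimization (resp. maximization) of $\mathit{cost}$. Let $T$ be the attractor trajectory defined below. Then any model $\mathcal{M}$ of $\varphi_{\mathrm{noNaN}}$ which lexicographically maximizes $T$ with respect to $\varphi_{\mathrm{noNaN}}$ is an optimal solution of the problem, i.e. there is no model $\mathcal{M}'$ of $\varphi_{\mathrm{noNaN}}$ with $\mathcal{M}'(\mathit{cost})<\mathcal{M}(\mathit{cost})$ (resp. $\mathcal{M}'(\mathit{cost})>\mathcal{M}(\mathit{cost})$).
   Context: Bits of $\mathit{cost}$ are indexed from most significant $\mathit{cost}[0]$ (sign) to least significant $\mathit{cost}[n-1]$; $n=e+s$ where $e$ is the number of exponent bits and $s$ the number of significand bits including the hidden bit, with IEEE 754-2008 binary semantics: with bias $b=2^{e-1}-1$, exponent field $E$ all ones and significand $m=0$ gives $\pm\infty$, $E$ all ones and $m\neq0$ gives NaN, $E=0$ gives the subnormal $(-1)^\sigma2^{1-b}(0.m)_2$, otherwise the normal $(-1)^\sigma2^{E-b}(1.m)_2$. The order $\le,<$ is the usual total order on non-NaN floating-point values ($+0$ and $-0$ equal). For an assignment $\tau_k$ to the $k$ most significant bits of $\mathit{cost}$, the dynamic attractor $d_{\tau_k}$ is the smallest (resp. largest) non-NaN floating-point value whose $k$ most significant bits agree with $\tau_k$,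 and $A^{\tau_k}[i]:=(\mathit{cost}[i]=d_{\tau_k}[i])$. Inductively, $\tau_0=\emptyset$ and for $k\in[0..n-1]$, $\tau_{k+1}=\tau_k\cup\{\mathit{cost}[k]:=b_k\}$ where $b_k=\overline{d_{\tau_k}[k]}$ if $\varphi_{\mathrm{noNaN}}\wedge\tau_k\wedge A^{\tau_k}[k]$ is unsatisfiable and $b_k=d_{\tau_k}[k]$ otherwise. The attractor trajectory is $T=[A^{\tau_0}[0],\dots,A^{\tau_{n-1}}[n-1]]$. For an assignment $\mu$ to all bits of $\mathit{cost}$, $\mu|_k$ is its restriction to $\mathit{cost}[0..k-1]$; $\mu$ lexicographically maximizes $T$ with respect to $\varphi_{\mathrm{noNaN}}$ iff for every $k\in[0..n-1]$: $\mu[k]=\overline{d_{\tau_k}[k]}$ if $\varphi_{\mathrm{noNaN}}\wedge\mu|_k\wedge T[k]$ is unsatisfiable, and $\mu[k]=d_{\tau_k}[k]$ otherwise. A model lexicographically maximizes $T$ iff its restriction to the bits of $\mathit{cost}$ does. *)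

(* Defs.v *)
From mathcomp Require Import all_boot all_order all_algebra.
Set Implicit Arguments. Unset Strict Implicit. Unset Printing Implicit Defensive.
Import Order.TTheory GRing.Theory Num.Theory.
Local Open Scope ring_scope.

(* Values of IEEE 754-2008 binary floating-point numbers: NaN, -oo, +oo,
   or a finite rational value (with +0 and -0 both mapped to 0). *)
Inductive fpval := FNaN | FNInf | FPInf | FFin of rat.

Definition bits2nat (l : seq bool) : nat :=
  foldl (fun acc (b : bool) => (2 * acc + b)%N) 0%N l.

Definition bias (e : nat) : int := (2 ^ e.-1)%N%:Z - 1.

(* Decoding of a bit vector cost[0..n-1] (n = e + s, cost[0] = sign,
   cost[1..e] = exponent field, cost[e+1..n-1] = trailing significand m). *)
Definition fpvalue (e s : nat) (t : seq bool) : fpval :=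
  let sg := head false t in
  let E := bits2nat (take e (behead t)) in
  let m := bits2nat (drop e.+1 t) in
  let sgn : rat := if sg then -1 else 1 in
  let frac : rat := (m%:R / (2 ^ s.-1)%N%:R) in
  if E == (2 ^ e).-1 then
    (if m == 0%N then (if sg then FNInf else FPInf) else FNaN)
  else if E == 0%N then FFin (sgn * (2%:R ^ (1 - bias e)) * frac)
  else FFin (sgn * (2%:R ^ (E%:Z - bias e)) * (1 + frac)).

Definition isNaN (e s : nat) (t : seq bool) : bool :=
  if fpvalue e s t is FNaN then true else false.

Definition fp_le (x y : fpval) : bool :=
  match x, y with
  | FNaN, _ | _, FNaN => false
  | FNInf, _ => true
  | _, FPInf => true
  | FFin a, FFin b => a <= b
  | _, _ => false
  end.

Definition fp_lt (x y : fpval) : bool := fp_le x y && ~~ fp_le y x.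

Definition better (minimize : bool) (x y : fpval) : bool :=
  if minimize then fp_lt x y else fp_lt y x.

Section Attractor.
Variables (e s : nat) (Model : Type) (phi : Model -> Prop)
          (cost : Model -> (e + s).-tuple bool) (minimize : bool).

Definition is_attractor (tau : seq bool) (d : (e + s).-tuple bool) : Prop :=
  ~~ isNaN e s d /\ take (size tau) d = tau /\
  forall v : (e + s).-tuple bool, ~~ isNaN e s v -> take (size tau) v = tau ->
    if minimize then fp_le (fpvalue e s d) (fpvalue e s v)
    else fp_le (fpvalue e s v) (fpvalue e s d).

Definition sat_with (tau : seq bool) (k : nat) (b : bool) : Prop :=
  exists M, phi M /\ ~~ isNaN e s (cost M) /\
    take (size tau) (cost M) = tau /\ nth false (cost M) k = b.

Fixpoint tau_rel (k : nat) (tau : seq bool) : Prop :=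
  match k with
  | 0%N => tau = [::]
  | k'.+1 => exists tau' (d : (e + s).-tuple bool),
      tau_rel k' tau' /\ is_attractor tau' d /\
      ((~ sat_with tau' k' (nth false d k') -> tau = rcons tau' (~~ nth false d k')) /\
       (sat_with tau' k' (nth false d k') -> tau = rcons tau' (nth false d k')))
  end.

(* mu lexicographically maximizes the attractor trajectory T
   w.r.t. phi_noNaN; T[k] is (cost[k] = d_{tau_k}[k]). *)
Definition lex_max_traj (mu : (e + s).-tuple bool) : Prop :=
  forall k, (k < e + s)%N ->
  forall tau (d : (e + s).-tuple bool), tau_rel k tau -> is_attractor tau d ->
    (~ sat_with (take k mu) k (nth false d k) -> nth false mu k = ~~ nth false d k) /\
    (sat_with (take k mu) k (nth false d k) -> nth false mu k = nth false d k).

End Attractor.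

(* Main.v *)
Require Import Defs.
From mathcomp Require Import all_boot all_order all_algebra.
From mathcomp Require Import zify ring lra.
Set Implicit Arguments. Unset Strict Implicit. Unset Printing Implicit Defensive.
Import Order.TTheory GRing.Theory Num.Theory.

Lemma foldl_bits acc l :
  foldl (fun acc (b : bool) => (2 * acc + b)%N) acc l = (acc * 2 ^ size l + bits2nat l)%N.
Proof.
elim: l acc => [|b l IH] acc /=; first by rewrite /bits2nat /= muln1 addn0.
rewrite /bits2nat /= IH [in RHS]IH expnS. nia.
Qed.

Lemma bits2nat_cat a b : bits2nat (a ++ b) = (bits2nat a * 2 ^ size b + bits2nat b)%N.
Proof. by rewrite {1}/bits2nat foldl_cat foldl_bits. Qed.

Lemma bits2nat_cons x l : bits2nat (x :: l) = (x * 2 ^ size l + bits2nat l)%N.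
Proof. by rewrite -cat1s bits2nat_cat /bits2nat /=. Qed.

Lemma bits2nat_lt l : (bits2nat l < 2 ^ size l)%N.
Proof.
elim: l => [|x l IH] //=; rewrite bits2nat_cons expnS; case: x => /=; lia.
Qed.

Lemma bits2nat_nseq0 j : bits2nat (nseq j false) = 0%N.
Proof. by elim: j => //= j IH; rewrite bits2nat_cons IH. Qed.

Lemma bits_lex a b j : size a = size b -> (j < size a)%N -> take j a = take j b ->
  nth false a j = true -> nth false b j = false -> (bits2nat b < bits2nat a)%N.
Proof.
move=> Hs Hj Ht Ha Hb.
rewrite -(cat_take_drop j.+1 a) -(cat_take_drop j.+1 b).
rewrite !bits2nat_cat !size_drop -Hs.
rewrite (take_nth false Hj) (take_nth false (_ : j < size b)%N); last by rewrite -Hs.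
rewrite -!cats1 !bits2nat_cat Ht Ha Hb /=.
have := bits2nat_lt (drop j.+1 b); rewrite size_drop -Hs.
set Q := 2 ^ _. set X := bits2nat (take j b). set Y := bits2nat (drop j.+1 b).
rewrite /bits2nat /=. nia.
Qed.
Open Scope ring_scope.

Definition fneg (x : fpval) := match x with
  | FNaN => FNaN | FNInf => FPInf | FPInf => FNInf | FFin a => FFin (- a) end.

Definition pvE (e s E m : nat) : fpval :=
  let frac : rat := (m%:R / (2 ^ s.-1)%N%:R) in
  if E == (2 ^ e).-1 then (if m == 0%N then FPInf else FNaN)
  else if E == 0%N then FFin (2%:R ^ (1 - bias e) * frac)
  else FFin (2%:R ^ (E%:Z - bias e) * (1 + frac)).

Definition pvN e s (N : nat) := pvE e s (N %/ 2 ^ s.-1) (N %% 2 ^ s.-1).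

Lemma fpvalue_split e s t : (size t = e + s)%N -> (0 < s)%N ->
  fpvalue e s t = (if head false t then fneg else id) (pvN e s (bits2nat (behead t))).
Proof.
move=> Hs s0; have HN : bits2nat (behead t) =
   (bits2nat (take e (behead t)) * 2 ^ s.-1 + bits2nat (drop e.+1 t))%N.
  rewrite -{1}(cat_take_drop e (behead t)) bits2nat_cat size_drop size_behead Hs.
  by case: t Hs => //= x r _; congr (_ * 2 ^ _ + _)%N; lia.
have Hm := bits2nat_lt (drop e.+1 t).
rewrite size_drop Hs (_ : (e + s - e.+1 = s.-1)%N) in Hm; last by lia.
rewrite /pvN HN divnMDl ?expn_gt0 // modnMDl divn_small // modn_small // addn0.
rewrite /fpvalue /pvE; case: (head false t) => /=.
  by do 2 (case: ifP => _ //=); rewrite ?mulN1r ?mulNr.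
by do 2 (case: ifP => _ //=); rewrite ?mul1r.
Qed.

Definition gN (P E m : nat) : nat := if E == 0%N then m else (2 ^ E.-1 * (P + m))%N.

Lemma gN_mono P N1 N2 : (0 < P)%N -> (N1 < N2)%N ->
  (gN P (N1 %/ P)%N (N1 %% P)%N < gN P (N2 %/ P)%N (N2 %% P)%N)%N.
Proof.
move=> P0 lt12.
have e1 := divn_eq N1 P; have e2 := divn_eq N2 P.
have m1 := @ltn_pmod N1 P P0; have m2 := @ltn_pmod N2 P P0.
set E1 := (N1 %/ P)%N in e1 *; set E2 := (N2 %/ P)%N in e2 *.
set a := (N1 %% P)%N in e1 m1 *; set b := (N2 %% P)%N in e2 m2 *.
have le : (E1 <= E2)%N by apply: leq_div2r; apply: ltnW.
rewrite /gN; case: (ltngtP E1 E2) le => // [lt _|eq _].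
- have g1 : ((if E1 == 0%N then a else 2 ^ E1.-1 * (P + a)) < 2 ^ E1 * P)%N.
    have [->|E1n0] := eqVneq E1 0%N; first by rewrite expn0 mul1n.
    case: E1 {lt e1} E1n0 => // E1 _ /=; rewrite expnS; nia.
  have g2 : (2 ^ E1 * P <= (if E2 == 0%N then b else 2 ^ E2.-1 * (P + b)))%N.
    case: E2 lt {e2} => // E2 lt /=.
    have : (2 ^ E1 <= 2 ^ E2)%N by rewrite leq_exp2l.
    nia.
  exact: leq_trans g1 g2.
- rewrite eq in e1 *; have ab : (a < b)%N by nia.
  case: eqP => // _; rewrite ltn_mul2l expn_gt0 /=; lia.
Qed.

Section PV.
Variables (e s : nat).
Hypotheses (he : (1 < e)%N) (hs : (1 < s)%N).
Let P := (2 ^ s.-1)%N.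
Let c : rat := 2%:R ^ (1 - bias e) / P%:R.

Lemma P_gt0 : (0 < P)%N. Proof. by rewrite expn_gt0. Qed.
Lemma c_gt0 : 0 < c.
Proof. by rewrite /c divr_gt0 // ?exprz_gt0 // ltr0n P_gt0. Qed.

Lemma pvE_fin E m : E != (2 ^ e).-1 -> pvE e s E m = FFin (c * (gN P E m)%:R).
Proof.
move=> /negbTE HE; rewrite /pvE HE /gN.
have P0 : P%:R != 0 :> rat by rewrite pnatr_eq0 -lt0n P_gt0.
case: eqP => [_|/eqP E0].
  by congr FFin; rewrite /c; field; exact: P0.
congr FFin; rewrite /c.
have -> : E%:Z - bias e = (1 - bias e) + (E.-1)%:Z.
  by case: E E0 HE => // E _ _ /=; rewrite -addn1 PoszD; ring.
rewrite expfzDr // natrM natrD -exprnP -natrX.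
field; exact: P0.
Qed.

Lemma fp_lt_fin a b : fp_lt (FFin a) (FFin b) = (a < b).
Proof. by rewrite /fp_lt /= -ltNge andb_idl // => /ltW. Qed.

Lemma pvN_lt N1 N2 : (N1 < N2)%N -> (N2 < 2 ^ e * P)%N -> pvN e s N2 <> FNaN ->
  fp_lt (pvN e s N1) (pvN e s N2).
Proof.
move=> lt12 bnd; rewrite /pvN -/P.
have e1 := divn_eq N1 P; have e2 := divn_eq N2 P.
have m1 := @ltn_pmod N1 P P_gt0; have m2 := @ltn_pmod N2 P P_gt0.
have E2b : (N2 %/ P < 2 ^ e)%N by rewrite ltn_divLR ?P_gt0 // mulnC.
have le : (N1 %/ P <= N2 %/ P)%N by apply: leq_div2r; apply: ltnW.
have ge1 : (0 < 2 ^ e)%N by rewrite expn_gt0.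
set E1 := (N1 %/ P)%N in e1 m1 le *; set E2 := (N2 %/ P)%N in e2 m2 E2b le *.
set a := (N1 %% P)%N in e1 m1 *; set b := (N2 %% P)%N in e2 m2 *.
have [HE2|HE2] := eqVneq E2 (2 ^ e).-1.
  rewrite [pvE _ _ E2 b]/pvE HE2 eqxx; case: eqP => // b0 _.
  have HE1 : E1 != (2 ^ e).-1.
    apply/eqP => HE1; move: lt12; rewrite e1 e2 HE1 HE2 b0; lia.
  by rewrite pvE_fin.
have HE1 : E1 != (2 ^ e).-1 by apply/eqP => HE1; move/eqP: HE2; apply; lia.
move=> _; rewrite !pvE_fin // fp_lt_fin ltr_pM2l ?c_gt0 // ltr_nat.
exact: gN_mono (P_gt0) lt12.
Qed.

End PV.

Lemma fneg_le x y : fp_le (fneg x) (fneg y) = fp_le y x.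
Proof. by case: x => [|||q]; case: y => [|||r] //=; rewrite lerN2. Qed.

Lemma fp_le_refl x : x <> FNaN -> fp_le x x.
Proof. by case: x => //= q _; rewrite lexx. Qed.

Lemma fp_lt_le x y : fp_lt x y -> fp_le x y.
Proof. by case/andP. Qed.

Lemma fp_lt_nle x y : fp_lt x y -> ~~ fp_le y x.
Proof. by case/andP. Qed.

Lemma le_negpos x y : fp_le (FFin 0) x -> fp_le (FFin 0) y -> fp_le (fneg x) y.
Proof. case: x => [|||q]; case: y => [|||r] //= hq hr; lra. Qed.

Lemma nle_posneg1 x y : fp_lt (FFin 0) x -> fp_le (FFin 0) y -> ~~ fp_le x (fneg y).
Proof.
case: x => [|||q]; case: y => [|||r] //=; rewrite ?fp_lt_fin //= => hq hr.
rewrite -ltNge; lra.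
Qed.

Lemma nle_posneg2 x y : fp_le (FFin 0) x -> fp_lt (FFin 0) y -> ~~ fp_le x (fneg y).
Proof.
case: x => [|||q]; case: y => [|||r] //=; rewrite ?fp_lt_fin //= => hq hr.
rewrite -ltNge; lra.
Qed.

Section Key.
Variables (e s : nat).
Hypotheses (he : (1 < e)%N) (hs : (1 < s)%N).

Definition keyv (t : seq bool) : nat :=
  if head false t then (2 ^ (e + s) - bits2nat (behead t))%N
  else (2 ^ (e + s) + bits2nat (behead t))%N.

Lemma Nbnd t : size t = (e + s)%N -> (bits2nat (behead t) < 2 ^ e * 2 ^ s.-1)%N.
Proof.
move=> Hs; have := bits2nat_lt (behead t); rewrite size_behead Hs -expnD.
by rewrite (_ : ((e + s).-1 = e + s.-1)%N) //; lia.
Qed.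

Lemma NbndC t : size t = (e + s)%N -> (bits2nat (behead t) < 2 ^ (e + s))%N.
Proof.
move=> Hs; have := bits2nat_lt (behead t); rewrite size_behead Hs => h.
apply: (leq_trans h); rewrite leq_exp2l //; lia.
Qed.

Lemma nonnan t : size t = (e + s)%N -> ~~ isNaN e s t ->
  pvN e s (bits2nat (behead t)) <> FNaN.
Proof.
move=> Hs; rewrite /isNaN fpvalue_split //; last by lia.
by case: (head false t); case: (pvN _ _ _).
Qed.

Lemma pv_le a b : (a < 2 ^ e * 2 ^ s.-1)%N -> (b < 2 ^ e * 2 ^ s.-1)%N ->
  pvN e s a <> FNaN -> pvN e s b <> FNaN ->
  fp_le (pvN e s a) (pvN e s b) = (a <= b)%N.
Proof.
move=> ha hb na nb; case: (ltngtP a b) => [lt|gt|->].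
- exact/fp_lt_le/pvN_lt.
- exact/negbTE/fp_lt_nle/pvN_lt.
- exact: fp_le_refl.
Qed.

Lemma pv0 : pvN e s 0 = FFin 0.
Proof.
rewrite /pvN div0n mod0n pvE_fin //= ?mulr0 //.
have : (2 ^ 1 < 2 ^ e)%N by rewrite ltn_exp2l.
rewrite eq_sym; lia.
Qed.

Lemma pv_nonneg a : (a < 2 ^ e * 2 ^ s.-1)%N -> pvN e s a <> FNaN ->
  fp_le (FFin 0) (pvN e s a).
Proof.
move=> ha na; rewrite -pv0 pv_le //; rewrite ?pv0 //.
by rewrite muln_gt0 !expn_gt0.
Qed.

Lemma pv_pos a : (0 < a)%N -> (a < 2 ^ e * 2 ^ s.-1)%N -> pvN e s a <> FNaN ->
  fp_lt (FFin 0) (pvN e s a).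
Proof. by move=> a0 ha na; rewrite -pv0; apply: pvN_lt. Qed.

Lemma key_char t u : size t = (e + s)%N -> size u = (e + s)%N ->
  ~~ isNaN e s t -> ~~ isNaN e s u ->
  fp_le (fpvalue e s t) (fpvalue e s u) = (keyv t <= keyv u)%N.
Proof.
move=> st su nt nu.
have ht := Nbnd st; have hu := Nbnd su; have ct := NbndC st; have cu := NbndC su.
have pt := nonnan st nt; have pu := nonnan su nu.
rewrite !fpvalue_split //; try lia.
rewrite /keyv.
set a := bits2nat (behead t) in ht ct pt *; set b := bits2nat (behead u) in hu cu pu *.
case: (head false t); case: (head false u) => /=.
- rewrite fneg_le pv_le //; apply/idP/idP; lia.
- rewrite le_negpos ?pv_nonneg //; apply/esym/idP; lia.
- have [a0|a0] := posnP a; have [b0|b0] := posnP b.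
  + rewrite a0 b0 pv0 /= oppr0 lexx; apply/esym/idP; lia.
  + have -> : (2 ^ (e + s) + a <= 2 ^ (e + s) - b)%N = false by apply/negbTE; lia.
    apply/negbTE/nle_posneg2; [exact: pv_nonneg|exact: pv_pos].
  + have -> : (2 ^ (e + s) + a <= 2 ^ (e + s) - b)%N = false by apply/negbTE; lia.
    apply/negbTE/nle_posneg1; [exact: pv_pos|exact: pv_nonneg].
  + have -> : (2 ^ (e + s) + a <= 2 ^ (e + s) - b)%N = false by apply/negbTE; lia.
    apply/negbTE/nle_posneg1; [exact: pv_pos|exact: pv_nonneg].
- rewrite pv_le //; apply/idP/idP; lia.
Qed.
End Key.
Close Scope ring_scope.

Lemma firstdiff (a b : seq bool) : size a = size b -> a <> b ->
  exists k, (k < size a)%N /\ take k a = take k b /\ nth false a k <> nth false b k.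
Proof.
elim: a b => [|x a IH] [|y b] //= [Hs] Hne.
have [xy|xy] := eqVneq x y.
  have Hne' : a <> b by move=> ab; apply: Hne; rewrite xy ab.
  have [k [Hk [Ht Hn]]] := IH b Hs Hne'.
  by exists k.+1; rewrite /= xy Ht.
by exists 0%N; split => //; split => //= /eqP; rewrite (negbTE xy).
Qed.

Section Main.
Variables (e s : nat).
Hypotheses (he : (1 < e)%N) (hs : (1 < s)%N).

Lemma key_split (a b c : seq bool) k :
  size a = (e + s)%N -> size b = (e + s)%N -> size c = (e + s)%N ->
  (0 < k)%N -> (k < e + s)%N ->
  take k a = take k c -> take k b = take k c ->
  nth false a k = nth false b k -> nth false a k <> nth false c k ->
  ((keyv e s a < keyv e s c)%N /\ (keyv e s b < keyv e s c)%N) \/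
  ((keyv e s c < keyv e s a)%N /\ (keyv e s c < keyv e s b)%N).
Proof.
move=> sa sb sc k0 kn.
have ca := NbndC he hs sa; have cb := NbndC he hs sb; have cc := NbndC he hs sc.
case: a sa ca => [|x ra]; first by move=> /= h; lia.
case: b sb cb => [|y rb]; first by move=> /= h; lia.
case: c sc cc => [|z rc]; first by move=> /= h; lia.
case: k k0 kn => // k _ kn /= sc cc sb cb sa ca [<- Ha] [<- Hb] Hab Hac.
rewrite /keyv /=.
have eac : size ra = size rc by lia.
have ebc : size rb = size rc by lia.
have kl : (k < size rc)%N by lia.
have Hb' : take k rb = take k ra by rewrite Hb Ha.
case Hk : (nth false ra k) Hab Hac => Hab Hac.
- have Hc : nth false rc k = false by case: (nth false rc k) Hac.
  have l1 := bits_lex eac (_ : (k < size ra)%N) Ha Hk Hc.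
  have l2 := bits_lex ebc (_ : (k < size rb)%N) (etrans Hb' Ha) (esym Hab) Hc.
  have {l1} l1 := l1 (ltac:(lia)); have {l2} l2 := l2 (ltac:(lia)).
  case: y; lia.
- have Hc : nth false rc k = true by case: (nth false rc k) Hac.
  have l1 := bits_lex (esym eac) kl (esym Ha) Hc Hk.
  have l2 := bits_lex (esym ebc) kl (etrans (esym Ha) (esym Hb')) Hc (esym Hab).
  case: y; lia.
Qed.

Lemma attr_ex (minimize : bool) (mu : (e + s).-tuple bool) k :
  ~~ isNaN e s mu -> (k <= e + s)%N ->
  exists d : (e + s).-tuple bool, is_attractor minimize (take k mu) d /\
   (forall v : (e + s).-tuple bool, ~~ isNaN e s v -> take k v = take k mu ->
      if minimize then (keyv e s d <= keyv e s v)%N else (keyv e s v <= keyv e s d)%N).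
Proof.
move=> Hmu Hk.
pose Pr := fun v : (e + s).-tuple bool => ~~ isNaN e s v && (take k v == take k mu).
have Pmu : Pr mu by rewrite /Pr Hmu eqxx.
have sk : size (take k mu) = k by rewrite size_takel // size_tuple.
case: minimize.
- case: (@arg_minnP _ mu Pr (fun v : (e + s).-tuple bool => keyv e s v) Pmu) => d /andP[Hd /eqP Htd] Hmin.
  have H2 : forall v : (e + s).-tuple bool, ~~ isNaN e s v -> take k v = take k mu ->
      (keyv e s d <= keyv e s v)%N.
    by move=> v Hv Htv; apply: Hmin; rewrite /Pr Hv Htv eqxx.
  exists d; split => //; split => //; rewrite sk; split => // v Hv Htv.
  by rewrite key_char // ?size_tuple //; apply: H2.
- case: (@arg_maxnP _ mu Pr (fun v : (e + s).-tuple bool => keyv e s v) Pmu) => d /andP[Hd /eqP Htd] Hmax.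
  have H2 : forall v : (e + s).-tuple bool, ~~ isNaN e s v -> take k v = take k mu ->
      (keyv e s v <= keyv e s d)%N.
    by move=> v Hv Htv; apply: Hmax; rewrite /Pr Hv Htv eqxx.
  exists d; split => //; split => //; rewrite sk; split => // v Hv Htv.
  by rewrite key_char // ?size_tuple //; apply: H2.
Qed.

Lemma tau_take (Model : Type) (phi : Model -> Prop) (cost : Model -> (e + s).-tuple bool)
  (minimize : bool) (mu : (e + s).-tuple bool) :
  ~~ isNaN e s mu -> lex_max_traj phi cost minimize mu ->
  forall k, (k <= e + s)%N -> tau_rel phi cost minimize k (take k mu).
Proof.
move=> Hmu Hlex; elim => [|k IH] Hk /=; first by rewrite take0.
have Hk' : (k < e + s)%N by [].
have [d [Hd _]] := attr_ex minimize Hmu (ltnW Hk').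
have IHk := IH (ltnW Hk').
exists (take k mu), d; split => //; split => //.
have [H1 H2] := Hlex k Hk' (take k mu) d IHk Hd.
rewrite (take_nth false) ?size_tuple //.
by split => [/H1|/H2] ->.
Qed.

Lemma witness (b : bool) : exists w : (e + s).-tuple bool,
  ~~ isNaN e s w /\ head false w = b /\ bits2nat (behead w) = 1%N.
Proof.
have sz : size (b :: (nseq (e + s - 2) false ++ [:: true])) == (e + s)%N.
  by rewrite /= size_cat size_nseq /=; apply/eqP; lia.
exists (Tuple sz); rewrite /=; split; last first.
  by split => //; rewrite bits2nat_cat bits2nat_nseq0.
rewrite /isNaN fpvalue_split ?(eqP sz) //; last by lia.
rewrite /= bits2nat_cat bits2nat_nseq0 /= /pvN divn_small; last first.
  by apply: (@leq_trans (2 ^ 1)) => //; rewrite leq_exp2l //; lia.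
rewrite pvE_fin //; first by case: (b) sz.
have : (2 ^ 1 < 2 ^ e)%N by rewrite ltn_exp2l.
rewrite eq_sym; lia.
Qed.

End Main.

Theorem theorem2 (e s : nat) (he : (1 < e)%N) (hs : (1 < s)%N)
  (Model : Type) (phi : Model -> Prop) (cost : Model -> (e + s).-tuple bool)
  (minimize : bool)
  (Hsat : exists M, phi M /\ ~~ isNaN e s (cost M))
  (M : Model) (HM : phi M) (HMnan : ~~ isNaN e s (cost M))
  (Hlex : lex_max_traj phi cost minimize (cost M)) :
  ~ (exists M' : Model, phi M' /\ ~~ isNaN e s (cost M') /\
       better minimize (fpvalue e s (cost M')) (fpvalue e s (cost M))).
Proof.
move=> [M' [HM' [HnM' Hbet]]].
set mu := cost M in HMnan Hlex Hbet; set nu := cost M' in HnM' Hbet.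
have smu : size mu = (e + s)%N by rewrite size_tuple.
have snu : size nu = (e + s)%N by rewrite size_tuple.
have kc := key_char he hs.
have Hbk : if minimize then (keyv e s nu < keyv e s mu)%N else (keyv e s mu < keyv e s nu)%N.
  move: Hbet; rewrite /better /fp_lt; case: (minimize); rewrite !kc //;
  case/andP; lia.
have Hne : (mu : seq bool) <> nu.
  by move=> E; move: Hbk; rewrite E; case: (minimize); lia.
have [k [Hk [Ht Hn]]] := firstdiff (etrans smu (esym snu)) Hne.
rewrite smu in Hk.
have [d [Hd Hdk]] := attr_ex he hs minimize HMnan (ltnW Hk).
have Htau := tau_take he hs HMnan Hlex (ltnW Hk).
have [H1 H2] := Hlex k Hk (take k mu) d Htau Hd.
have Hmd : nth false mu k = nth false d k.
  apply/eqP; apply/negPn/negP => Hnd.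
  have Hnud : nth false nu k = nth false d k.
    by move: Hn Hnd; case: (nth false mu k); case: (nth false nu k); case: (nth false d k).
  have Hsat' : sat_with phi cost (take k mu) k (nth false d k).
    exists M'; split => //; split => //.
    by rewrite size_takel ?smu ?(ltnW Hk) //.
  by move/eqP: Hnd; apply; apply: H2.
have Hdn := Hdk nu HnM' (esym Ht).
have Htd : take k d = take k mu.
  by case: Hd => _ [+ _]; rewrite size_takel ?smu ?(ltnW Hk).
have sd : size d = (e + s)%N by rewrite size_tuple.
have Hdnk : nth false d k <> nth false nu k by rewrite -Hmd.
case: k Hk Ht Hn Hmd Htd Hdn Hdnk Hdk {H1 H2 Htau Hd} => [|k] Hk Ht Hn Hmd Htd Hdn Hdnk Hdk.
- have [w [Hw [Hwh Hwb]]] := witness he hs (~~ head false d).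
  have Hdw := Hdk w Hw (ltac:(by rewrite !take0)).
  have cmu := NbndC he hs smu; have cnu := NbndC he hs snu; have cd := NbndC he hs sd.
  rewrite !nth0 in Hn Hmd Hdnk.
  move: Hbk Hdn Hdw; rewrite /keyv Hwh Hwb Hmd.
  move: Hn Hdnk; rewrite Hmd.
  case: (head false d); case: (head false nu) => Ha Hb; try (by exfalso; apply: Ha); rewrite /=; case: (minimize); lia.
- have := key_split he hs sd smu snu (ltn0Sn k) Hk (etrans Htd Ht) Ht (esym Hmd) Hdnk.
  move: Hbk Hdn; case: (minimize); lia.
Qed.
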